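(* Let $\pi$ be a policy, $p$ a prior, and $f$ a utility function. For any integer $i$ with $1\le i\le c_{\mathrm{avg}}(\pi,p)$, define $\Delta_i:=f_{\mathrm{avg}}(\pi_i,p)-f_{\mathrm{avg}}(\pi_{i-1},p)$. Then $\Delta_i\ge\Delta^l_{\pi,i}$.
   Context: Finite ground set $V$, finite state set $Y$; a realization $\phi:V\to Y$ is drawn from prior $p$; $f:2^V\times\Phi_V\to\mathbb{R}$. A partial realization $\psi$ maps $\mathrm{dom}(\psi)\subseteq V$ to $Y$; $\phi\sim\psi$ means agreement on $\mathrm{dom}(\psi)$. A (possibly randomized) policy maps the observed partial realization to the next element to select or $\bot$ (terminate); $\psi_t$ denotes observations after $t$ selections; $E(\pi,\phi)$ is the set of selected elements; $f_{\mathrm{avg}}(\pi,p)=\mathbb{E}[f(E(\pi,\phi),\phi)]$, $c_{\mathrm{avg}}(\pi,p)=\mathbb{E}[|E(\pi,\phi)|]$. $\Delta^f_p(v\mid\psi)=\mathbb{E}[f(\{v\}\cup\mathrm{dom}(\psi),\phi)-f(\mathrm{dom}(\psi),\phi)\mid\phi\sim\psi]$. A sub-policy of $\pi$ runs like $\pi$ but may terminate earlier. For $\tau\ge0,\rho\in[0,1]$, $\pi^{\tau,\rho}$ is the sub-policy of $\pi$ that with probability $\rho$ terminates as soon as every remaining element has expected marginal gain strictly smaller than $\tau$, otherwise terminates as soon as every remaining element has expected marginal gain at most $\tau$. For each integer $i\le c_{\mathrm{avg}}(\pi,p)$ the sub-policy of this form with average cost $i$ exists and is unique; denote it $\pi_i$;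 $\pi_0$ terminates before selecting any element. $\Delta^l_{\pi,i}$ is the largest real $u$ such that almost surely, for all $t$ until $\pi_i$ terminates, $\Delta^f_p(\pi_i(\psi_t)\mid\psi_t)\ge u$. *)

(* Defs.v *)
From HB Require Import structures.
From mathcomp Require Import all_boot all_order all_algebra.
Set Implicit Arguments. Unset Strict Implicit. Unset Printing Implicit Defensive.
Import Order.TTheory GRing.Theory Num.Theory.
Local Open Scope ring_scope.

Section Adaptive.
Variables (R : realFieldType) (V Y : finType).

Definition realization := {ffun V -> Y}.
(* partial realizations: psi v = Some y iff v in dom psi and psi(v) = y *)
Definition prealization := {ffun V -> option Y}.

Definition pdom (psi : prealization) : {set V} := [set v | psi v != None].

Definition psi_empty : prealization := [ffun => None].

Definition consistent (phi : realization) (psi : prealization) : bool :=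
  [forall v, if psi v is Some y then phi v == y else true].

Definition extend (psi : prealization) (phi : realization) (v : V) : prealization :=
  [ffun w => if w == v then Some (phi v) else psi w].

Definition is_dist (T : finType) (d : {ffun T -> R}) : Prop :=
  (forall x, 0 <= d x) /\ \sum_x d x = 1.

Definition cond_gain (p : {ffun realization -> R})
    (f : {set V} -> realization -> R) (v : V) (psi : prealization) : R :=
  (\sum_(phi | consistent phi psi) p phi * (f (v |: pdom psi) phi - f (pdom psi) phi))
  / (\sum_(phi | consistent phi psi) p phi).

(* deterministic policy: observed partial realization -> next element or None (= bot) *)
Definition dpolicy := {ffun prealization -> option V}.

(* randomized policy: a probability distribution over deterministic policies *)
Definition rpolicy := {ffun dpolicy -> R}.

(* one step of running s on phi: select a new element and observe its state,
   or terminate (fixed point) *)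
Definition step (s : dpolicy) (phi : realization) (psi : prealization) : prealization :=
  match s psi with
  | Some v => if psi v == None then extend psi phi v else psi
  | None => psi
  end.

Definition obs_at (s : dpolicy) (phi : realization) (t : nat) : prealization :=
  iter t (step s phi) psi_empty.

(* final observations; at most #|V| selections happen *)
Definition final_obs (s : dpolicy) (phi : realization) : prealization :=
  obs_at s phi #|V|.

Definition selected (s : dpolicy) (phi : realization) : {set V} :=
  pdom (final_obs s phi).

Definition f_avg (mu : rpolicy) (p : {ffun realization -> R})
    (f : {set V} -> realization -> R) : R :=
  \sum_s \sum_phi mu s * p phi * f (selected s phi) phi.

Definition c_avg (mu : rpolicy) (p : {ffun realization -> R}) : R :=
  \sum_s \sum_phi mu s * p phi * (#|selected s phi|)%:R.

Definition trunc (p : {ffun realization -> R}) (f : {set V} -> realization -> R)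
    (tau : R) (strict : bool) (s : dpolicy) : dpolicy :=
  [ffun psi => if [forall v, (v \notin pdom psi) ==>
                     (if strict then cond_gain p f v psi < tau
                      else cond_gain p f v psi <= tau)]
               then None else s psi].

(* pi^{tau,rho}: with probability rho use the strict rule, otherwise the
   non-strict rule (coin independent of pi's own randomness and of phi) *)
Definition thr_policy (mu : rpolicy) (p : {ffun realization -> R})
    (f : {set V} -> realization -> R) (tau rho : R) : rpolicy :=
  [ffun s' => \sum_(s | trunc p f tau true s == s') rho * mu s
            + \sum_(s | trunc p f tau false s == s') (1 - rho) * mu s].

Definition as_gain_lb (mu : rpolicy) (p : {ffun realization -> R})
    (f : {set V} -> realization -> R) (u : R) : Prop :=
  forall (s : dpolicy) (phi : realization), 0 < mu s -> 0 < p phi ->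
  forall t : nat, (t < #|V|)%N ->
  forall v : V, s (obs_at s phi t) = Some v -> obs_at s phi t v = None ->
    u <= cond_gain p f v (obs_at s phi t).

End Adaptive.

(* Main.v *)
Require Import Defs.
From HB Require Import structures.
From mathcomp Require Import all_boot all_order all_algebra ring.
Set Implicit Arguments. Unset Strict Implicit. Unset Printing Implicit Defensive.
Import Order.TTheory GRing.Theory Num.Theory.
Local Open Scope ring_scope.

Definition psub (V Y : finType) (a b : prealization V Y) : Prop :=
  forall v y, a v = Some y -> b v = Some y.

Lemma psub_trans (V Y : finType) (a b c : prealization V Y) :
  psub a b -> psub b c -> psub a c.
Proof. by move=> h1 h2 v y /h1 /h2. Qed.

Lemma step_sub (V Y : finType) (s : dpolicy V Y) phi psi :
  psub psi (step s phi psi).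
Proof.
move=> w y Hw; rewrite /step; case: (s psi) => [v|] //.
case: eqP => Hv //; rewrite /extend ffunE; case: eqP => [Ewv|] //.
by move: Hw; rewrite Ewv Hv.
Qed.

Lemma obs_S (V Y : finType) (s : dpolicy V Y) phi t :
  obs_at s phi t.+1 = step s phi (obs_at s phi t).
Proof. by rewrite /obs_at iterS. Qed.

Lemma obs_mono (V Y : finType) (s : dpolicy V Y) phi t t' :
  (t <= t')%N -> psub (obs_at s phi t) (obs_at s phi t').
Proof.
move=> /subnK <-; elim: (t' - t)%N => [|k IH] //.
rewrite addSn obs_S; apply: psub_trans IH _; exact: step_sub.
Qed.

Lemma cons_sub (V Y : finType) (phi : realization V Y) a b :
  psub a b -> consistent phi b -> consistent phi a.
Proof.
move=> hs /forallP hb; apply/forallP => v; case E: (a v) => [y|] //.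
by move: (hb v); rewrite (hs _ _ E).
Qed.

Lemma cons_obs (V Y : finType) (s : dpolicy V Y) phi t :
  consistent phi (obs_at s phi t).
Proof.
elim: t => [|t IH]; first by apply/forallP => v; rewrite ffunE.
rewrite obs_S /step; case: (s _) => [v|] //; case: eqP => // _.
apply/forallP => w; rewrite /extend ffunE; case: eqP => [->|_] //.
by move/forallP: IH => /(_ w).
Qed.

Lemma obs_det (V Y : finType) (s : dpolicy V Y) phi phi' t :
  consistent phi' (obs_at s phi t) -> obs_at s phi' t = obs_at s phi t.
Proof.
elim: t => [|t IH] // Hc.
have Hc' : consistent phi' (obs_at s phi t).
  by apply: cons_sub Hc; apply: obs_mono.
rewrite !obs_S (IH Hc'); move: Hc; rewrite obs_S /step.
case: (s _) => [v|] //; case: eqP => // _ /forallP /(_ v).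
rewrite /extend ffunE eqxx => /eqP e.
by apply/ffunP => w; rewrite !ffunE e.
Qed.

Lemma pdom_sub (V Y : finType) (a b : prealization V Y) :
  psub a b -> pdom a \subset pdom b.
Proof.
move=> h; apply/subsetP => v; rewrite !inE.
by case E: (a v) => [y|] //; rewrite (h _ _ E).
Qed.


Lemma inv_obs (V Y : finType) (L S : dpolicy V Y) phi t :
  (forall psi, S psi != None -> L psi = S psi) ->
  S (obs_at S phi t) != None -> obs_at S phi t = obs_at L phi t.
Proof.
move=> H; elim: t => [|t IH] // .
rewrite !obs_S; case E: (S (obs_at S phi t)) => [v|].
  rewrite -IH ?E // /step (H _) ?E //.
by rewrite /step E E.
Qed.

Lemma sub_obs (V Y : finType) (L S : dpolicy V Y) phi t :
  (forall psi, S psi != None -> L psi = S psi) ->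
  psub (obs_at S phi t) (obs_at L phi t).
Proof.
move=> H; elim: t => [|t IH] //.
case E: (S (obs_at S phi t)) => [v|].
  rewrite !obs_S -(@inv_obs _ _ L S phi t H) ?E // /step (H _) ?E //.
rewrite !obs_S {1}/step E; apply: psub_trans IH _; exact: step_sub.
Qed.

Lemma pdom_extend (V Y : finType) (psi : prealization V Y) phi v :
  pdom (extend psi phi v) = v |: pdom psi.
Proof.
apply/setP => w; rewrite /extend !inE ffunE; by case: (w == v).
Qed.

Lemma gain_t (R : realFieldType) (V Y : finType) (L S : dpolicy V Y)
   (p : {ffun realization V Y -> R}) (f : {set V} -> realization V Y -> R) (u : R) t :
  (forall psi, S psi != None -> L psi = S psi) ->
  (forall phi, 0 <= p phi) ->
  (forall phi, 0 < p phi -> forall v, L (obs_at L phi t) = Some v ->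
      obs_at L phi t v = None -> u <= cond_gain p f v (obs_at L phi t)) ->
  0 <= \sum_phi p phi * ((S (obs_at S phi t) == None)%:R *
      ((f (pdom (obs_at L phi t.+1)) phi - u * #|pdom (obs_at L phi t.+1)|%:R) -
       (f (pdom (obs_at L phi t)) phi - u * #|pdom (obs_at L phi t)|%:R))).
Proof.
move=> H Hp Hb.
rewrite (partition_big (fun phi => obs_at L phi t) predT) //.
apply: sumr_ge0 => psi _.
case: (boolP [exists phi0, obs_at L phi0 t == psi]) => [/existsP [phi0 /eqP E0] | /existsPn Hn]; last first.
  by rewrite big1 // => phi /eqP E; move: (Hn phi); rewrite E eqxx.
have Hcl phi : (obs_at L phi t == psi) = consistent phi psi.
  apply/eqP/idP => [<-|Hc]; first exact: cons_obs.
  by rewrite -E0; apply: obs_det; rewrite E0.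
rewrite (eq_bigl (fun phi => consistent phi psi)); last by move=> phi /=; rewrite Hcl.
have HI phi : consistent phi psi ->
    (S (obs_at S phi t) == None) = (S (obs_at S phi0 t) == None).
  move=> Hc; rewrite (@obs_det _ _ S phi0 phi t) //.
  by apply: cons_sub Hc; rewrite -E0; exact: sub_obs.
rewrite (eq_bigr (fun phi => (S (obs_at S phi0 t) == None)%:R * (p phi * ((f (pdom (step L phi psi)) phi
     - u * #|pdom (step L phi psi)|%:R) - (f (pdom psi) phi - u * #|pdom psi|%:R)))));
  last first.
  move=> phi Hc; rewrite -(HI _ Hc) obs_S.
  by move: (Hcl phi); rewrite Hc => /eqP ->; rewrite mulrCA.
rewrite -mulr_sumr; apply: mulr_ge0; first by rewrite ler0n.
rewrite /step; case EL: (L psi) => [v|]; last first.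
  by rewrite big1 // => ? _; rewrite subrr mulr0.
case: eqP => Hv; last by rewrite big1 // => ? _; rewrite subrr mulr0.
rewrite (eq_bigr (fun phi => p phi * (f (v |: pdom psi) phi - f (pdom psi) phi) - p phi * u)); last first.
  move=> phi _; rewrite pdom_extend cardsU1.
  have -> : v \notin pdom psi by rewrite inE Hv.
  rewrite add1n -addn1 natrD; ring.
rewrite sumrB -mulr_suml subr_ge0.
case: (boolP [exists phi1, consistent phi1 psi && (0 < p phi1)]) => [/existsP[phi1 /andP[Hc1 Hp1]]|/existsPn Hn2]; last first.
  have -> : \sum_(i | consistent i psi) p i = 0.
    apply: big1 => phi Hc; move: (Hn2 phi); rewrite Hc /= lt_def (Hp phi) andbT.
    by move/negbNE/eqP.
  rewrite mul0r; apply: sumr_ge0 => phi Hc.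
  move: (Hn2 phi); rewrite Hc /= lt_def (Hp phi) andbT => /negbNE/eqP ->.
  by rewrite mul0r.
have E1 : obs_at L phi1 t = psi by apply/eqP; rewrite Hcl.
have := Hb phi1 Hp1 v; rewrite E1 => /(_ EL Hv).
have Dpos : 0 < \sum_(i | consistent i psi) p i.
  rewrite lt_def sumr_ge0 // andbT; apply/eqP => D0.
  move: (psumr_eq0P (fun i _ => Hp i) D0 Hc1) => E.
  by move: Hp1; rewrite E ltxx.
rewrite /cond_gain ler_pdivlMr // => h; by rewrite mulrC.
Qed.

Lemma pair_bound (R : realFieldType) (V Y : finType) (L S : dpolicy V Y)
   (p : {ffun realization V Y -> R}) (f : {set V} -> realization V Y -> R) (u : R) :
  (forall psi, S psi != None -> L psi = S psi) ->
  (forall phi, 0 <= p phi) ->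
  (forall phi, 0 < p phi -> forall t, (t < #|V|)%N -> forall v, L (obs_at L phi t) = Some v ->
      obs_at L phi t v = None -> u <= cond_gain p f v (obs_at L phi t)) ->
  0 <= \sum_phi p phi * ((f (selected L phi) phi - u * #|selected L phi|%:R) -
       (f (selected S phi) phi - u * #|selected S phi|%:R)).
Proof.
move=> H Hp Hb.
pose G s phi k := f (pdom (obs_at s phi k)) phi - u * #|pdom (obs_at s phi k)|%:R.
have step_id phi t : G L phi t.+1 - G L phi t - (G S phi t.+1 - G S phi t) =
   (S (obs_at S phi t) == None)%:R * (G L phi t.+1 - G L phi t).
  case E: (S (obs_at S phi t)) => [v|] /=.
    have E1 := @inv_obs _ _ L S phi t H.
    rewrite /G !obs_S -E1 ?E // /step (H _) ?E // mul0r; ring.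
  rewrite /G (obs_S S) /step E mul1r; ring.
have tel s phi : G s phi #|V| - G s phi 0 = \sum_(t < #|V|) (G s phi t.+1 - G s phi t).
  by rewrite -(telescope_sumr _ (leq0n _)) big_mkord.
rewrite (eq_bigr (fun phi => \sum_(t < #|V|) p phi * ((S (obs_at S phi t) == None)%:R *
      (G L phi t.+1 - G L phi t)))); last first.
  move=> phi _; rewrite -mulr_sumr; congr (_ * _).
  have -> : f (selected L phi) phi - u * #|selected L phi|%:R -
            (f (selected S phi) phi - u * #|selected S phi|%:R) =
            (G L phi #|V| - G L phi 0) - (G S phi #|V| - G S phi 0).
    rewrite /G /selected /final_obs /=; ring.
  by rewrite !tel -sumrB; apply: eq_bigr => t _; rewrite step_id.
rewrite exchange_big /=; apply: sumr_ge0 => t _.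
apply: gain_t => // phi Hp1 v; exact: Hb.
Qed.

Lemma card_sel (V Y : finType) (L S : dpolicy V Y) phi :
  (forall psi, S psi != None -> L psi = S psi) ->
  (#|selected S phi| <= #|selected L phi|)%N.
Proof. by move=> H; apply/subset_leq_card/pdom_sub/sub_obs. Qed.

Lemma sum_fiber (R : realFieldType) (T : finType) (g : T -> T) (h : T -> T -> R) :
  \sum_s' \sum_(s | g s == s') h s s' = \sum_s h s (g s).
Proof.
under eq_bigr do rewrite big_mkcond.
rewrite exchange_big /=; apply: eq_bigr => s _.
rewrite -big_mkcond /= (big_pred1 (g s)) // => s'; by rewrite /= eq_sym.
Qed.

Lemma thr_sum (R : realFieldType) (V Y : finType) (mu : rpolicy R V Y)
   (p : {ffun realization V Y -> R}) (f : {set V} -> realization V Y -> R)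
   (tau rho : R) (G : dpolicy V Y -> R) :
  \sum_s' thr_policy mu p f tau rho s' * G s' =
  \sum_s mu s * (rho * G (trunc p f tau true s) + (1 - rho) * G (trunc p f tau false s)).
Proof.
under eq_bigr do rewrite ffunE mulrDl !mulr_suml.
rewrite big_split /= !sum_fiber -big_split /=.
by apply: eq_bigr => s _; rewrite mulrDr !mulrA [mu s * _]mulrC [mu s * (1 - _)]mulrC.
Qed.

Definition Fu (R : realFieldType) (V Y : finType) (p : {ffun realization V Y -> R})
   (f : {set V} -> realization V Y -> R) (u : R) (s : dpolicy V Y) : R :=
  \sum_phi p phi * (f (selected s phi) phi - u * #|selected s phi|%:R).

Definition Kc (R : realFieldType) (V Y : finType) (p : {ffun realization V Y -> R})
   (s : dpolicy V Y) : R :=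
  \sum_phi p phi * #|selected s phi|%:R.

Lemma favg_u (R : realFieldType) (V Y : finType) (X : rpolicy R V Y)
   (p : {ffun realization V Y -> R}) (f : {set V} -> realization V Y -> R) (u : R) :
  f_avg X p f - u * c_avg X p = \sum_s X s * Fu p f u s.
Proof.
rewrite /f_avg /c_avg mulr_sumr -sumrB; apply: eq_bigr => s _.
rewrite mulr_sumr -sumrB /Fu mulr_sumr; apply: eq_bigr => phi _; ring.
Qed.

Lemma cavg_K (R : realFieldType) (V Y : finType) (X : rpolicy R V Y)
   (p : {ffun realization V Y -> R}) :
  c_avg X p = \sum_s X s * Kc p s.
Proof.
rewrite /c_avg; apply: eq_bigr => s _; rewrite /Kc mulr_sumr.
by apply: eq_bigr => phi _; rewrite mulrA.
Qed.

Lemma cond_imp (R : realFieldType) (b1 b2 : bool) (t1 t2 : R) :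
  (t1 < t2) || ((t1 == t2) && (b1 || ~~ b2)) ->
  forall x, (if b1 then x < t1 else x <= t1) -> (if b2 then x < t2 else x <= t2).
Proof.
move=> H x; case/orP: H => [lt12|/andP[/eqP<- hb]].
  case: b1; case: b2 => /= h.
  - exact: lt_trans lt12.
  - exact: ltW (lt_trans h lt12).
  - exact: le_lt_trans lt12.
  - exact: le_trans h (ltW lt12).
by move: hb; case: b1; case: b2 => //= _ h; exact: ltW.
Qed.

Lemma trunc_sub (R : realFieldType) (V Y : finType) (p : {ffun realization V Y -> R})
   (f : {set V} -> realization V Y -> R) (s : dpolicy V Y) (b1 b2 : bool) (t1 t2 : R) :
  (t1 < t2) || ((t1 == t2) && (b1 || ~~ b2)) ->
  forall psi, trunc p f t2 b2 s psi != None ->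
    trunc p f t1 b1 s psi = trunc p f t2 b2 s psi.
Proof.
move=> Hx psi; rewrite !ffunE.
case C2: [forall v, _] => //= _.
case C1: [forall v, _] => //.
move/negbT: C2 => /negP; case; apply/forallP => v; apply/implyP => hv.
apply: (cond_imp Hx); move/forallP: C1 => /(_ v); by rewrite hv.
Qed.

Lemma thr_ge (R : realFieldType) (V Y : finType) (mu : rpolicy R V Y)
   (p : {ffun realization V Y -> R}) (f : {set V} -> realization V Y -> R)
   (tau rho : R) (b : bool) s :
  is_dist mu -> 0 <= rho <= 1 ->
  (if b then rho else 1 - rho) * mu s <= thr_policy mu p f tau rho (trunc p f tau b s).
Proof.
move=> [Hm _] /andP[r0 r1].
have r1' : 0 <= 1 - rho by rewrite subr_ge0.
rewrite ffunE; case: b.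
  rewrite (bigD1 s) //= -addrA lerDl; apply: addr_ge0; apply: sumr_ge0 => *;
  exact: mulr_ge0.
rewrite [X in _ <= _ + X](bigD1 s) //= addrCA lerDl; apply: addr_ge0; apply: sumr_ge0 => *;
exact: mulr_ge0.
Qed.

Lemma Fu_pair (R : realFieldType) (V Y : finType) (L S : dpolicy V Y)
   (p : {ffun realization V Y -> R}) (f : {set V} -> realization V Y -> R) (u : R) :
  (forall psi, S psi != None -> L psi = S psi) ->
  (forall phi, 0 <= p phi) ->
  (forall phi, 0 < p phi -> forall t, (t < #|V|)%N -> forall v, L (obs_at L phi t) = Some v ->
      obs_at L phi t v = None -> u <= cond_gain p f v (obs_at L phi t)) ->
  0 <= Fu p f u L - Fu p f u S.
Proof.
move=> H Hp Hb; rewrite /Fu -sumrB.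
under eq_bigr do rewrite -mulrBr.
exact: pair_bound.
Qed.

Lemma Kc_pair (R : realFieldType) (V Y : finType) (L S : dpolicy V Y)
   (p : {ffun realization V Y -> R}) :
  (forall psi, S psi != None -> L psi = S psi) ->
  (forall phi, 0 <= p phi) ->
  Kc p S <= Kc p L.
Proof.
move=> H Hp; apply: ler_sum => phi _; apply: ler_wpM2l => //.
by rewrite ler_nat; apply: card_sel.
Qed.

Lemma wpos (R : realFieldType) (a c d : R) :
  0 <= a -> 0 <= c -> (0 < a -> 0 <= d) -> 0 <= a * c * d.
Proof.
move=> a0 c0 H; case: (eqVneq a 0) => [->|na]; first by rewrite !mul0r.
have ap : 0 < a by rewrite lt_def na a0.
by apply: mulr_ge0; [exact: mulr_ge0 | exact: H].
Qed.

Lemma addr_le0' (R : realFieldType) (a b : R) : a <= 0 -> b <= 0 -> a + b <= 0.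
Proof. by move=> ha hb; rewrite -(addr0 0) lerD. Qed.

Lemma fin_step (R : realFieldType) (a b c d u : R) :
  c - d = 1 -> 0 <= a - u * c - (b - u * d) -> u <= a - b.
Proof.
move=> H H0; rewrite -subr_ge0.
have -> : a - b - u = a - u * c - (b - u * d).
  by rewrite -[X in _ - X = _]mulr1 -H; ring.
exact: H0.
Qed.

Theorem lemma10 (R : realFieldType) (V Y : finType)
    (mu : rpolicy R V Y) (p : {ffun realization V Y -> R})
    (f : {set V} -> realization V Y -> R) (i : nat)
    (tau rho tau' rho' : R) :
  is_dist mu -> is_dist p ->
  (1 <= i)%N -> i%:R <= c_avg mu p ->
  (* pi_i = pi^{tau,rho} *)
  0 <= tau -> 0 <= rho <= 1 -> c_avg (thr_policy mu p f tau rho) p = i%:R ->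
  (* pi_{i-1} = pi^{tau',rho'} *)
  0 <= tau' -> 0 <= rho' <= 1 -> c_avg (thr_policy mu p f tau' rho') p = (i.-1)%:R ->
  (* Delta_i >= Delta^l_{pi,i}, i.e. Delta_i >= every a.s. lower bound u *)
  forall u : R, as_gain_lb (thr_policy mu p f tau rho) p f u ->
    u <= f_avg (thr_policy mu p f tau rho) p f - f_avg (thr_policy mu p f tau' rho') p f.
Proof.
move=> Hmu [Hp0 Hp1] Hi _ _ Hr Hc _ Hr' Hc' u Hlb.
have Hm0 s : 0 <= mu s by case: Hmu.
move: (Hr) (Hr') => /andP[r0 r1] /andP[r0' r1'].
have r1s : 0 <= 1 - rho by rewrite subr_ge0.
have r1s' : 0 <= 1 - rho' by rewrite subr_ge0.
have Hcd : c_avg (thr_policy mu p f tau rho) p - c_avg (thr_policy mu p f tau' rho') p = 1.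
  by rewrite Hc Hc' -{1}(prednK Hi) -natr1 addrAC subrr add0r.
have Hpair b s (b2 : bool) (t2 : R) : 0 < (if b then rho else 1 - rho) * mu s ->
    (tau < t2) || ((tau == t2) && (b || ~~ b2)) ->
    0 <= Fu p f u (trunc p f tau b s) - Fu p f u (trunc p f t2 b2 s).
  move=> wpos' Hord; apply: Fu_pair => //; first exact: trunc_sub.
  move=> phi php t ht v; apply: Hlb => //.
  exact: lt_le_trans wpos' (thr_ge _ _ _ _ _ Hmu Hr).
have four (F : dpolicy V Y -> R) s :
    mu s * (rho * F (trunc p f tau true s) + (1 - rho) * F (trunc p f tau false s)) -
    mu s * (rho' * F (trunc p f tau' true s) + (1 - rho') * F (trunc p f tau' false s)) =
    mu s * (rho * rho' * (F (trunc p f tau true s) - F (trunc p f tau' true s)) +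
            rho * (1 - rho') * (F (trunc p f tau true s) - F (trunc p f tau' false s)) +
            (1 - rho) * rho' * (F (trunc p f tau false s) - F (trunc p f tau' true s)) +
            (1 - rho) * (1 - rho') * (F (trunc p f tau false s) - F (trunc p f tau' false s))).
  by ring.
case: (ltgtP tau tau') => [lt|gt|eq].
-
  apply: (fin_step Hcd).
  rewrite !favg_u !thr_sum -sumrB; apply: sumr_ge0 => s _; rewrite (four (Fu p f u)).
  case: (eqVneq (mu s) 0) => [->|nm]; first by rewrite mul0r.
  have mp : 0 < mu s by rewrite lt_def nm Hm0.
  apply: mulr_ge0 => //.
  have lt' : (tau < tau') || ((tau == tau') && false) by rewrite lt.
  repeat apply: addr_ge0; apply: wpos => // H; apply: Hpair => //=;
    by [rewrite mulr_gt0 | rewrite lt].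
-
  exfalso; move: Hcd; rewrite !cavg_K !thr_sum -sumrB => H1.
  have : \sum_s (mu s * (rho * Kc p (trunc p f tau true s) + (1 - rho) * Kc p (trunc p f tau false s)) -
      mu s * (rho' * Kc p (trunc p f tau' true s) + (1 - rho') * Kc p (trunc p f tau' false s))) <= 0.
    apply: sumr_le0 => s _; rewrite (four (Kc p)); apply: (mulr_ge0_le0 (Hm0 s)).
    have Kl b b' : Kc p (trunc p f tau b s) - Kc p (trunc p f tau' b' s) <= 0.
      rewrite subr_le0; apply: Kc_pair => //; apply: trunc_sub; by rewrite gt.
    repeat apply: addr_le0'; (apply: mulr_ge0_le0; [exact: mulr_ge0 | exact: Kl]).
  by rewrite H1 ler10.
-
  subst tau'.
  have H1 := Hcd; move: H1; rewrite !cavg_K !thr_sum -sumrB => H1.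
  have HK s : 0 <= Kc p (trunc p f tau true s) - Kc p (trunc p f tau false s).
    rewrite subr_ge0; apply: Kc_pair => //; apply: trunc_sub; by rewrite eqxx orbT.
  have two (F : dpolicy V Y -> R) s :
    mu s * (rho * F (trunc p f tau true s) + (1 - rho) * F (trunc p f tau false s)) -
    mu s * (rho' * F (trunc p f tau true s) + (1 - rho') * F (trunc p f tau false s)) =
    (rho - rho') * (mu s * (F (trunc p f tau true s) - F (trunc p f tau false s))) by ring.
  move: H1; under eq_bigr do rewrite two; rewrite -mulr_sumr => H1.
  have Xge : 0 <= \sum_s mu s * (Kc p (trunc p f tau true s) - Kc p (trunc p f tau false s)).
    by apply: sumr_ge0 => s _; apply: mulr_ge0.
  have dpos : 0 < rho - rho'.
    rewrite ltNge; apply/negP => dle.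
    have : (rho - rho') * \sum_s mu s * (Kc p (trunc p f tau true s) - Kc p (trunc p f tau false s)) <= 0.
      exact: mulr_le0_ge0.
    by rewrite H1 ler10.
  have rpos : 0 < rho.
    by apply: lt_le_trans dpos _; rewrite lerBlDr lerDl.
  apply: (fin_step Hcd).
  rewrite !favg_u !thr_sum -sumrB; apply: sumr_ge0 => s _; rewrite two.
  apply: mulr_ge0; first exact: ltW.
  case: (eqVneq (mu s) 0) => [->|nm]; first by rewrite mul0r.
  have mp : 0 < mu s by rewrite lt_def nm Hm0.
  apply: mulr_ge0 => //; apply: (Hpair true) => /=.
    exact: mulr_gt0.
  by rewrite eqxx orbT.
Qed.
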